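(* Let $G$ be a compact group with normalized Haar measure $dg$ and let $V$ be a finite-dimensional unitary complex representation of $G$ which decomposes as $V\cong\bigoplus_{\ell=1}^L V_\ell^{\oplus R_\ell}$, where $V_1,\ldots,V_L$ are pairwise non-isomorphic irreducible representations with $\dim V_\ell=N_\ell$. Fix, for each $\ell$, an orthonormal basis of $V_\ell$, and a $G$-equivariant unitary isomorphism of $V$ with $\bigoplus_\ell V_\ell^{\oplus R_\ell}$, so that each $f\in V$ is represented by an $L$-tuple $(A_1,\ldots,A_L)$, where $A_\ell$ is the complex $N_\ell\times R_\ell$ matrix whose $i$-th column is the coordinate vector of the component of $f$ in the $i$-th copy of $V_\ell$. Let $H=\prod_{\ell=1}^L U(N_\ell)$ act on $V$ by $(U_1,\ldots,U_L)\cdot(A_1,\ldots,A_L)=(U_1A_1,\ldots,U_LA_L)$. For $f\in V$ define the second moment $m^2_f=\int_G (g\cdot f)(g\cdot f)^*\,dg$ (with respect to an orthonormal basis of $V$). Then for $f,f'\in V$, $m^2_f=m^2_{f'}$ if and only if $f=h\cdot f'$ for some $h\in H$.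
   Context: Every finite-dimensional representation of a compact group is unitary and decomposes as a direct sum of irreducible representations; $V_\ell^{\oplus R_\ell}$ denotes the direct sum of $R_\ell$ copies of $V_\ell$. $U(n)$ denotes the group of $n\times n$ unitary matrices. *)

(* Defs.v *)
From HB Require Import structures.
From mathcomp Require Import all_boot all_order all_algebra.
From mathcomp Require Import all_classical all_reals all_analysis.
From mathcomp Require Import complex.

Set Implicit Arguments.
Unset Strict Implicit.
Unset Printing Implicit Defensive.

Import Order.TTheory GRing.Theory Num.Theory.
Import numFieldNormedType.Exports.
Local Open Scope ring_scope.
Local Open Scope classical_set_scope.

Notation Borel G := (g_sigma_algebraType (@open G)).

Definition is_compact_group (G : ptopologicalType)
  (mul : G -> G -> G) (inv : G -> G) (one : G) : Prop :=
  (forall a b c, mul a (mul b c) = mul (mul a b) c) /\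
  (forall a, mul one a = a /\ mul a one = a) /\
  (forall a, mul (inv a) a = one /\ mul a (inv a) = one) /\
  continuous (fun p : G * G => mul p.1 p.2) /\
  continuous inv /\
  hausdorff_space G /\
  compact [set: G].

(* mu is a normalized Haar measure: a left- and right-invariant Borel
   probability measure (on a compact group Haar measure is bi-invariant). *)
Definition is_normalized_haar (R : realType) (G : ptopologicalType)
  (mul : G -> G -> G) (mu : probability (Borel G) R) : Prop :=
  (forall (a : G) (A : set (Borel G)), measurable A ->
      mu [set mul a x | x in A] = mu A) /\
  (forall (a : G) (A : set (Borel G)), measurable A ->
      mu [set mul x a | x in A] = mu A).

Definition adjmx (R : realType) m n (A : 'M[R[i]]_(m, n)) : 'M[R[i]]_(n, m) :=
  map_mx (@conjc R) A^T.

Definition unitarymx (R : realType) n (A : 'M[R[i]]_n) : Prop :=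
  A *m adjmx A = 1%:M.

Definition is_unitary_rep (R : realType) (G : ptopologicalType)
  (mul : G -> G -> G) (one : G) n (rho : G -> 'M[R[i]]_n) : Prop :=
  [/\ (forall a b, rho (mul a b) = rho a *m rho b),
      rho one = 1%:M,
      (forall g, unitarymx (rho g)) &
      (forall i j, continuous (fun g : G => complex.Re (rho g i j) : R) /\
                   continuous (fun g : G => complex.Im (rho g i j) : R))].

(* irreducible: nonzero, and the only invariant subspaces of C^n are 0 and
   C^n; subspaces are encoded as row spaces of matrices U (rows = vectors),
   invariance of the column-vector action x |-> rho g x being
   stability of the row space under right multiplication by (rho g)^T. *)
Definition is_irreducible (R : realType) (G : Type) n
  (rho : G -> 'M[R[i]]_n) : Prop :=
  (0 < n)%N /\
  forall U : 'M[R[i]]_n, (forall g, stablemx U (rho g)^T) ->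
     U = 0 \/ row_full U.

Definition rep_iso (R : realType) (G : Type) n1 n2
  (rho1 : G -> 'M[R[i]]_n1) (rho2 : G -> 'M[R[i]]_n2) : Prop :=
  exists T : 'M[R[i]]_(n1, n2),
    row_free T /\ row_full T /\ forall g, rho1 g *m T = T *m rho2 g.

Definition cintegral (R : realType) (G : ptopologicalType)
  (mu : probability (Borel G) R) (h : G -> R[i]) : R[i] :=
  Complex (Rintegral mu setT (fun g => complex.Re (h g)))
          (Rintegral mu setT (fun g => complex.Im (h g))).

Definition moment2 (R : realType) (G : ptopologicalType)
  (mu : probability (Borel G) R) n (rho : G -> 'M[R[i]]_n)
  (f : 'cV[R[i]]_n) : 'M[R[i]]_n :=
  \matrix_(a, b) cintegral mu
     (fun g => (rho g *m f) a 0 * conjc ((rho g *m f) b 0)).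

(* index set of coordinates of \bigoplus_l V_l^{R_l}:
   (l, (j, i)) = j-th coordinate of the i-th copy of V_l,
   i.e. entry (j, i) of the N_l x R_l matrix A_l *)
Definition cidx L (N Rm : 'I_L -> nat) : finType :=
  {l : 'I_L & ('I_(N l) * 'I_(Rm l))%type}.

Definition mkidx L (N Rm : 'I_L -> nat) (l : 'I_L) (j : 'I_(N l))
  (i : 'I_(Rm l)) : cidx N Rm :=
  Tagged (fun l => ('I_(N l) * 'I_(Rm l))%type) (j, i).

Definition coords (R : realType) L (N Rm : 'I_L -> nat) n
  (Phi : cidx N Rm -> 'I_n -> R[i]) (f : 'cV[R[i]]_n) : cidx N Rm -> R[i] :=
  fun x => \sum_(k < n) Phi x k * f k 0.

Definition unitary_coords (R : realType) L (N Rm : 'I_L -> nat) n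
  (Phi : cidx N Rm -> 'I_n -> R[i]) : Prop :=
  (forall k k' : 'I_n,
      \sum_(x : cidx N Rm) conjc (Phi x k) * Phi x k' = (k == k')%:R) /\
  (forall x y : cidx N Rm,
      \sum_(k < n) Phi x k * conjc (Phi y k) = (x == y)%:R).

Definition equivariant_coords (R : realType) (G : Type) L (N Rm : 'I_L -> nat)
  n (rho : G -> 'M[R[i]]_n) (sigma : forall l, G -> 'M[R[i]]_(N l))
  (Phi : cidx N Rm -> 'I_n -> R[i]) : Prop :=
  forall g (f : 'cV[R[i]]_n) (l : 'I_L) (j : 'I_(N l)) (i : 'I_(Rm l)),
    coords Phi (rho g *m f) (mkidx j i) =
    \sum_(k < N l) sigma l g j k * coords Phi f (mkidx k i).

Definition H_related (R : realType) L (N Rm : 'I_L -> nat) n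
  (Phi : cidx N Rm -> 'I_n -> R[i]) (f f' : 'cV[R[i]]_n) : Prop :=
  exists U : forall l : 'I_L, 'M[R[i]]_(N l),
    (forall l, unitarymx (U l)) /\
    forall (l : 'I_L) (j : 'I_(N l)) (i : 'I_(Rm l)),
      coords Phi f (mkidx j i) =
      \sum_(k < N l) U l j k * coords Phi f' (mkidx k i).

(* Main.v *)
Require Import Defs.
From HB Require Import structures.
From mathcomp Require Import all_boot all_order all_algebra.
From mathcomp Require Import all_classical all_reals all_analysis.
From mathcomp Require Import complex spectral sesquilinear.
Import Order.TTheory GRing.Theory Num.Theory Num.Def.
Import numFieldNormedType.Exports.
Local Open Scope ring_scope.
Set Implicit Arguments. Unset Strict Implicit. Unset Printing Implicit Defensive.
Local Open Scope sesquilinear_scope.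

Section LA.
Variable C : numClosedFieldType.
Local Notation "B ^!" :=
  (orthomx conjC (mx_of_hermitian (hermitian1mx _)) B) : matrix_set_scope.

Lemma trCmul m n p (A : 'M[C]_(m, n)) (B : 'M[C]_(n, p)) :
  (A *m B)^t* = B^t* *m A^t*.
Proof. by rewrite trmx_mul map_mxM. Qed.

Lemma MMt0 m n (M : 'M[C]_(m, n)) : M *m M^t* = 0 -> M = 0.
Proof.
move=> H; apply/matrixP => i j; rewrite [RHS]mxE.
have /matrixP/(_ i i) := H; rewrite !mxE => H2.
have H3 : forall k, true -> 0 <= M i k * (M^t*) k i.
  by move=> k _; rewrite !mxE mul_conjC_ge0.
have := psumr_eq0P H3 H2 isT (i := j).
by rewrite !mxE => /eqP; rewrite mul_conjC_eq0 => /eqP.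
Qed.

Lemma kerGram r N k (P Q : 'M[C]_(r, N)) (Z : 'M[C]_(k, r)) :
  P *m P^t* = Q *m Q^t* -> Z *m P = 0 -> Z *m Q = 0.
Proof.
move=> PQ ZP; apply: MMt0.
by rewrite trCmul mulmxA -(mulmxA Z) -PQ mulmxA -(mulmxA (Z *m P)) -trCmul ZP mul0mx.
Qed.

Lemma core_unit m N (X Y : 'M[C]_(m, N)) : row_full X ->
  X *m X^t* = Y *m Y^t* -> exists V : 'M[C]_N, V \is unitarymx /\ X *m V = Y.
Proof.
move=> fX XY.
have H1 : pinvmx X *m X = 1%:M.
  by have := mulmxKpV (submx_full 1%:M fX); rewrite mul1mx.
exists (pinvmx X *m Y); split.
  apply/unitarymxP.
  by rewrite trCmul mulmxA -(mulmxA _ Y) -XY mulmxA H1 mul1mx -trCmul H1 trmx1 map_mx1.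
have Z0 : (X *m pinvmx X - 1%:M) *m X = 0.
  by rewrite mulmxBl -mulmxA H1 mulmx1 mul1mx subrr.
have := kerGram XY Z0; rewrite mulmxBl mul1mx => /subr0_eq.
by rewrite -mulmxA.
Qed.

Lemma aux_unit r N k1 k2 (P Q : 'M[C]_(r, N)) (Pc : 'M[C]_(k1, N))
  (Qc : 'M[C]_(k2, N)) : k1 = k2 ->
  Pc *m Pc^t* = 1%:M -> Qc *m Qc^t* = 1%:M ->
  Pc *m P^t* = 0 -> Qc *m Q^t* = 0 -> row_full (col_mx P Pc) ->
  P *m P^t* = Q *m Q^t* -> exists V : 'M[C]_N, V \is unitarymx /\ P *m V = Q.
Proof.
move=> e; subst k2 => PP QQ PcP QcQ full PQ.
have PPc : P *m Pc^t* = 0.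
  rewrite -[LHS]trmxCK trCmul trmxCK PcP.
  by apply/matrixP => i j; rewrite !mxE conjC0.
have QQc : Q *m Qc^t* = 0.
  rewrite -[LHS]trmxCK trCmul trmxCK QcQ.
  by apply/matrixP => i j; rewrite !mxE conjC0.
have [V [uV eV]] : exists V : 'M[C]_N, V \is unitarymx /\ col_mx P Pc *m V = col_mx Q Qc.
  apply: core_unit full _.
  by rewrite !tr_col_mx !map_row_mx !mul_col_row PP QQ PcP QcQ PPc QQc PQ.
exists V; split => //.
by move: eV; rewrite mul_col_mx => /eq_col_mx [].
Qed.

Lemma rank_Gram r N (P Q : 'M[C]_(r, N)) : P *m P^t* = Q *m Q^t* ->
  \rank P = \rank Q.
Proof.
move=> PQ.
have e : (kermx P :=: kermx Q)%MS.
  apply/eqmxP/andP; split; apply/sub_kermxP.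
    by apply: (kerGram PQ); apply/sub_kermxP.
  by apply: (kerGram (esym PQ)); apply/sub_kermxP.
have h : \rank (kermx P) = \rank (kermx Q) by rewrite e.
move: h; rewrite !mxrank_ker => h.
have hP := rank_leq_row P; have hQ := rank_leq_row Q.
by apply/eqP; rewrite -(eqn_add2r (r - \rank P)) subnKC // h subnKC.
Qed.

Lemma Gram_unitary r N (P Q : 'M[C]_(r, N)) : P *m P^t* = Q *m Q^t* ->
  exists V : 'M[C]_N, V \is unitarymx /\ P *m V = Q.
Proof.
move=> PQ.
pose Pc := schmidt (row_base P^!%MS).
pose Qc := schmidt (row_base Q^!%MS).
apply: (@aux_unit _ _ _ _ P Q Pc Qc) => //.
- by rewrite !rank_ortho (rank_Gram PQ).
- by apply/unitarymxP; rewrite schmidt_unitarymx // rank_leq_col.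
- by apply/unitarymxP; rewrite schmidt_unitarymx // rank_leq_col.
- apply/orthomx1P.
  by rewrite eqmx_schmidt_free ?row_base_free // eq_row_base.
- apply/orthomx1P.
  by rewrite eqmx_schmidt_free ?row_base_free // eq_row_base.
- rewrite /row_full -addsmxE.
  rewrite (adds_eqmx (eqmx_refl P) (eqmx_schmidt_free (row_base_free _))).
  by rewrite (adds_eqmx (eqmx_refl P) (eq_row_base _)) (addsmx_ortho P) mxrank1.
Qed.

End LA.
Section Schur.
Variables (R : realType) (G : Type).

Lemma schur_scalar n (s : G -> 'M[R[i]]_n) (T : 'M[R[i]]_n) :
  is_irreducible s -> (forall g, s g *m T = T *m s g) -> exists c, T = c%:M.
Proof.
move=> [npos irr] comm.
have [c Hc] := eigenvalue_closed (T^T) npos.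
exists c.
set U := eigenspace T^T c.
have UT : U *m T^T = c *: U by apply/eigenspaceP.
have stab : forall g, stablemx U (s g)^T.
  move=> g; apply/eigenspaceP.
  by rewrite -mulmxA -trmx_mul -comm trmx_mul mulmxA UT -scalemxAl.
case: (irr U stab) => [U0|fU].
  by have Hc2 : U != 0 := Hc; rewrite U0 eqxx in Hc2.
have : (1%:M <= U)%MS by rewrite sub1mx.
move/eigenspaceP; rewrite mul1mx scalemx1 => h.
by rewrite -[T]trmxK h tr_scalar_mx.
Qed.

Lemma schur_zero n1 n2 (s1 : G -> 'M[R[i]]_n1) (s2 : G -> 'M[R[i]]_n2)
  (T : 'M[R[i]]_(n1, n2)) :
  is_irreducible s1 -> is_irreducible s2 -> ~ rep_iso s1 s2 ->
  (forall g, s1 g *m T = T *m s2 g) -> T = 0.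
Proof.
move=> [n1pos irr1] [n2pos irr2] niso comm.
have T0 : T^T = 0 -> T = 0 by move=> h; rewrite -[T]trmxK h trmx0.
set K := kermx T^T.
have stK : forall g, stablemx K (s2 g)^T.
  move=> g; apply/sub_kermxP.
  by rewrite -mulmxA -trmx_mul -comm trmx_mul mulmxA mulmx_ker mul0mx.
case: (irr2 K stK) => [K0|fK]; last first.
  apply: T0; have : (1%:M <= K)%MS by rewrite sub1mx.
  by move/sub_kermxP; rewrite mul1mx.
have fT : row_free T^T by rewrite -kermx_eq0 -/K K0.
set I := <<T^T>>%MS.
have stI : forall g, stablemx I (s1 g)^T.
  move=> g; rewrite /I (eqmxMr _ (genmxE _)) genmxE.
  by rewrite -trmx_mul comm trmx_mul submxMl.
case: (irr1 I stI) => [I0|fI].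
  apply: T0; have : (T^T <= I)%MS by rewrite /I genmxE.
  by rewrite I0 submx0 => /eqP.
exfalso; apply: niso; exists T; split; last split => //.
- by move: fI; rewrite /row_free /row_full /I genmxE mxrank_tr.
- by move: fT; rewrite /row_free /row_full mxrank_tr.
Qed.

End Schur.
Local Open Scope classical_set_scope.
Section Meas.
Context (R : realType) (G : ptopologicalType) (mul : G -> G -> G) (inv : G -> G) (one : G)
  (HG : is_compact_group mul inv one) (mu : probability (Borel G) R)
  (Hmu : is_normalized_haar mul mu).

Lemma cont_meas (h : G -> R) : continuous h -> measurable_fun (T := Borel G) setT h.
Proof.
move=> /continuousP cf.
apply: (measurability _ (measurable_realfun.RGenOpens.measurableE R)).
move=> _ [_ [a [b ->]] <-]; apply: sub_sigma_algebra.
rewrite setTI; apply: cf; exact: interval_open.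
Qed.

Lemma cont_bnd (h : G -> R) : continuous h -> exists M, forall x, `|h x| <= M.
Proof.
move=> ch.
have cp : compact (h @` setT).
  apply: continuous_compact; last by case: HG => _ [_ [_ [_ [_ [_ ?]]]]].
  exact/continuous_subspaceT.
have [M [_ HM]] := compact_bounded cp.
exists (M + 1) => x; apply: (HM (M + 1)); first by rewrite ltrDl.
by exists x.
Qed.

Lemma cont_int (h : G -> R) : continuous h -> mu.-integrable setT (EFin \o h).
Proof.
move=> ch; apply: measurable_bounded_integrable => //.
- by move: (probability_setT mu) => /= E; rewrite [X in (X < _)%E]E ltry.
- exact: cont_meas.
have [M HM] := cont_bnd ch.
exists M; split; first by rewrite num_real.
by move=> y My x _; rewrite /= (le_trans (HM x)) // ltW.
Qed.

Lemma mul_cont a : continuous (mul a).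
Proof.
case: HG => _ [_ [_ [cm _]]].
move=> x; apply: (@continuous_comp _ _ _ (fun y => (a, y)) (fun p => mul p.1 p.2)).
  by apply: cvg_pair => //=; exact: cvg_cst.
exact: cm.
Qed.

Lemma mul_meas a : measurable_fun (T := Borel G) (U := Borel G) setT (mul a).
Proof.
apply: (@measurability _ _ (Borel G) (Borel G) setT (mul a) open) => //.
move=> _ [B oB <-]; apply: sub_sigma_algebra; rewrite setTI.
by move: (@mul_cont a) => /continuousP; apply.
Qed.

Lemma Rint_inv (h : G -> R) a : continuous h ->
  Rintegral mu setT (fun x => h (mul a x)) = Rintegral mu setT h.
Proof.
move=> ch.
have [ass [idl [invl _]]] := HG.
rewrite /Rintegral; congr fine.
rewrite [RHS](eq_measure_integral (pushforward mu (mul a : Borel G -> Borel G))).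
- exact: mul_meas.
- move=> mphi.
  rewrite (integral_pushforward mphi) //.
  + by apply/measurable_realfun.measurable_EFinP; exact: cont_meas.
  rewrite preimage_setT.
  have -> : ((EFin \o h) \o mul a) = EFin \o (h \o mul a) by [].
  apply: cont_int; move=> x; apply: continuous_comp; [exact: mul_cont | exact: ch].
- move=> mphi A mA _; rewrite /pushforward /= -(proj1 Hmu (inv a) A mA).
  congr (mu _); apply/seteqP; split => x /=.
    by move=> [y Ay <-]; rewrite ass (proj2 (invl a)) (proj1 (idl y)).
  by move=> Ax; exists (mul a x) => //; rewrite ass (proj1 (invl a)) (proj1 (idl x)).
Qed.

End Meas.
Local Open Scope classical_set_scope.
Local Open Scope ring_scope.

Section CInt.
Variable R : realType.

Lemma ReD (x y : R[i]) : complex.Re (x + y) = complex.Re x + complex.Re y.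
Proof. by case: x => a b; case: y => c d. Qed.
Lemma ImD (x y : R[i]) : complex.Im (x + y) = complex.Im x + complex.Im y.
Proof. by case: x => a b; case: y => c d. Qed.
Lemma ReM (x y : R[i]) : complex.Re (x * y) = complex.Re x * complex.Re y - complex.Im x * complex.Im y.
Proof. by case: x => a b; case: y => c d. Qed.
Lemma ImM (x y : R[i]) : complex.Im (x * y) = complex.Re x * complex.Im y + complex.Im x * complex.Re y.
Proof. by case: x => a b; case: y => c d. Qed.
Lemma Reconj (x : R[i]) : complex.Re (conjc x) = complex.Re x.
Proof. by case: x. Qed.
Lemma Imconj (x : R[i]) : complex.Im (conjc x) = - complex.Im x.
Proof. by case: x. Qed.
Lemma cE (x : R[i]) : x = Complex (complex.Re x) (complex.Im x).
Proof. by case: x. Qed.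
Lemma Re0 : complex.Re (0 : R[i]) = 0. Proof. by []. Qed.
Lemma Im0 : complex.Im (0 : R[i]) = 0. Proof. by []. Qed.

Context (G : ptopologicalType) (mul : G -> G -> G) (inv : G -> G) (one : G)
  (HG : is_compact_group mul inv one) (mu : probability (Borel G) R)
  (Hmu : is_normalized_haar mul mu).

Definition cgood (h : G -> R[i]) :=
  continuous (fun g => complex.Re (h g)) /\ continuous (fun g => complex.Im (h g)).

Lemma cgood_cst c : cgood (fun _ => c).
Proof. by split => x; exact: cvg_cst. Qed.

Lemma cgood_add f h : cgood f -> cgood h -> cgood (fun g => f g + h g).
Proof.
move=> [f1 f2] [h1 h2]; split.
  have -> : (fun g => complex.Re (f g + h g)) = (fun g => complex.Re (f g) + complex.Re (h g)).
    by apply/funext => g; rewrite ReD.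
  by move=> x; apply: cvgD; [exact: f1|exact: h1].
have -> : (fun g => complex.Im (f g + h g)) = (fun g => complex.Im (f g) + complex.Im (h g)).
  by apply/funext => g; rewrite ImD.
by move=> x; apply: cvgD; [exact: f2|exact: h2].
Qed.

Lemma cgood_mul f h : cgood f -> cgood h -> cgood (fun g => f g * h g).
Proof.
move=> [f1 f2] [h1 h2]; split.
  have -> : (fun g => complex.Re (f g * h g)) = (fun g => complex.Re (f g) * complex.Re (h g) - complex.Im (f g) * complex.Im (h g)).
    by apply/funext => g; rewrite ReM.
  by move=> x; apply: cvgB; apply: cvgM; [exact: f1|exact: h1|exact: f2|exact: h2].
have -> : (fun g => complex.Im (f g * h g)) = (fun g => complex.Re (f g) * complex.Im (h g) + complex.Im (f g) * complex.Re (h g)).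
  by apply/funext => g; rewrite ImM.
by move=> x; apply: cvgD; apply: cvgM; [exact: f1|exact: h2|exact: f2|exact: h1].
Qed.

Lemma cgood_conj f : cgood f -> cgood (fun g => conjc (f g)).
Proof.
move=> [f1 f2]; split.
  have -> : (fun g => complex.Re (conjc (f g))) = (fun g => complex.Re (f g)).
    by apply/funext => g; rewrite Reconj.
  exact: f1.
have -> : (fun g => complex.Im (conjc (f g))) = (fun g => - complex.Im (f g)).
  by apply/funext => g; rewrite Imconj.
by move=> x; apply: cvgN; exact: f2.
Qed.

Lemma cgood_sum (I : Type) (r : seq I) (P : pred I) (F : I -> G -> R[i]) :
  (forall i, cgood (F i)) -> cgood (fun g => \sum_(i <- r | P i) F i g).
Proof.
move=> HF; elim: r => [|a r IH].
  have -> : (fun g => \sum_(i <- [::] | P i) F i g) = (fun _ => 0).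
    by apply/funext => g; rewrite big_nil.
  exact: cgood_cst.
have -> : (fun g => \sum_(i <- a :: r | P i) F i g) =
   (fun g => (if P a then F a g else 0) + \sum_(i <- r | P i) F i g).
  by apply/funext => g; rewrite big_cons; case: (P a); rewrite ?add0r.
apply: cgood_add => //; case: (P a) => //; exact: cgood_cst.
Qed.

Lemma cgood_comp f a : cgood f -> cgood (fun g => f (mul a g)).
Proof.
move=> [f1 f2]; split.
  have -> : (fun g => complex.Re (f (mul a g))) = (fun g => complex.Re (f g)) \o mul a by [].
  by move=> x; apply: continuous_comp; [exact: (mul_cont HG)|exact: f1].
have -> : (fun g => complex.Im (f (mul a g))) = (fun g => complex.Im (f g)) \o mul a by [].
by move=> x; apply: continuous_comp; [exact: (mul_cont HG)|exact: f2].
Qed.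

Lemma cint_add f h : cgood f -> cgood h ->
  cintegral mu (fun g => f g + h g) = cintegral mu f + cintegral mu h.
Proof.
move=> [f1 f2] [h1 h2]; rewrite /cintegral.
under eq_fun do rewrite ReD; under [X in Complex _ (Rintegral _ _ X)]eq_fun do rewrite ImD.
rewrite !RintegralD //; try exact: (cont_int HG).
Qed.

Lemma cint_mull c f : cgood f ->
  cintegral mu (fun g => c * f g) = c * cintegral mu f.
Proof.
move=> [f1 f2]; rewrite /cintegral; case: c => a b.
have i1 := cont_int HG mu f1; have i2 := cont_int HG mu f2.
have -> : (fun g => complex.Re ((a +i* b)%C * f g)) =
  (fun g => a * complex.Re (f g) - b * complex.Im (f g)) by apply/funext => g; rewrite ReM.
have -> : (fun g => complex.Im ((a +i* b)%C * f g)) =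
  (fun g => a * complex.Im (f g) + b * complex.Re (f g)) by apply/funext => g; rewrite ImM.
rewrite RintegralB //; last 2 first.
- by apply: (cont_int HG mu) => x; apply: cvgM => //; [exact: cvg_cst|exact: f1].
- by apply: (cont_int HG mu) => x; apply: cvgM => //; [exact: cvg_cst|exact: f2].
rewrite RintegralD //; last 2 first.
- by apply: (cont_int HG mu) => x; apply: cvgM => //; [exact: cvg_cst|exact: f2].
- by apply: (cont_int HG mu) => x; apply: cvgM => //; [exact: cvg_cst|exact: f1].
by rewrite !RintegralZl.
Qed.

Lemma cint_mulr c f : cgood f ->
  cintegral mu (fun g => f g * c) = cintegral mu f * c.
Proof.
move=> gf; rewrite mulrC -cint_mull //; congr cintegral; apply/funext => g; exact: mulrC.
Qed.

Lemma cint_cst c : cintegral mu (fun _ => c) = c.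
Proof.
rewrite /cintegral !Rintegral_cst //.
have E : fine (mu [set: G]) = 1 by rewrite (probability_setT mu).
by rewrite E !mulr1 [RHS]cE.
Qed.

Lemma cint_sum (I : Type) (r : seq I) (P : pred I) (F : I -> G -> R[i]) :
  (forall i, cgood (F i)) ->
  cintegral mu (fun g => \sum_(i <- r | P i) F i g) = \sum_(i <- r | P i) cintegral mu (F i).
Proof.
move=> HF; elim: r => [|a r IH].
  have -> : (fun g => \sum_(i <- [::] | P i) F i g) = (fun _ => 0).
    by apply/funext => g; rewrite big_nil.
  by rewrite cint_cst big_nil.
have -> : (fun g => \sum_(i <- a :: r | P i) F i g) =
   (fun g => (if P a then F a g else 0) + \sum_(i <- r | P i) F i g).
  by apply/funext => g; rewrite big_cons; case: (P a); rewrite ?add0r.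
rewrite cint_add; last 2 first.
- by case: (P a) => //; exact: cgood_cst.
- exact: cgood_sum.
rewrite IH big_cons; case: (P a) => //.
by rewrite cint_cst add0r.
Qed.

Lemma cint_inv f a : cgood f ->
  cintegral mu (fun g => f (mul a g)) = cintegral mu f.
Proof.
move=> [f1 f2]; rewrite /cintegral.
rewrite (Rint_inv HG Hmu (h := fun g => complex.Re (f g)) a f1).
by rewrite (Rint_inv HG Hmu (h := fun g => complex.Im (f g)) a f2).
Qed.

Definition cintM p q (F : G -> 'M[R[i]]_(p, q)) : 'M[R[i]]_(p, q) :=
  \matrix_(i, j) cintegral mu (fun g => F g i j).
Definition mgood p q (F : G -> 'M[R[i]]_(p, q)) := forall i j, cgood (fun g => F g i j).

Lemma mgood_mul p q r (F : G -> 'M[R[i]]_(p, q)) (H : G -> 'M[R[i]]_(q, r)) :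
  mgood F -> mgood H -> mgood (fun g => F g *m H g).
Proof.
move=> gF gH i j.
have -> : (fun g => (F g *m H g) i j) = (fun g => \sum_k F g i k * H g k j).
  by apply/funext => g; rewrite mxE.
apply: cgood_sum => k; exact: cgood_mul.
Qed.

Lemma mgood_cst p q (A : 'M[R[i]]_(p, q)) : mgood (fun _ => A).
Proof. by move=> i j; exact: cgood_cst. Qed.

Lemma mgood_adj p q (F : G -> 'M[R[i]]_(p, q)) : mgood F -> mgood (fun g => adjmx (F g)).
Proof.
move=> gF i j.
have -> : (fun g => adjmx (F g) i j) = (fun g => conjc (F g j i)).
  by apply/funext => g; rewrite !mxE.
exact: cgood_conj.
Qed.

Lemma mgood_comp p q (F : G -> 'M[R[i]]_(p, q)) a : mgood F -> mgood (fun g => F (mul a g)).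
Proof. by move=> gF i j; exact: (@cgood_comp (fun g => F g i j) a (gF i j)). Qed.

Lemma cintM_mul m p q r (A : 'M[R[i]]_(m, p)) (F : G -> 'M[R[i]]_(p, q))
  (B : 'M[R[i]]_(q, r)) :
  mgood F -> cintM (fun g => A *m F g *m B) = A *m cintM F *m B.
Proof.
move=> gF; apply/matrixP => i j; rewrite mxE.
have -> : (fun g => (A *m F g *m B) i j) =
    (fun g => \sum_b (\sum_a A i a * F g a b) * B b j).
  apply/funext => g; rewrite mxE; apply: eq_bigr => b _; rewrite mxE //.
rewrite (@cint_sum _ _ _ (fun b g => (\sum_a A i a * F g a b) * B b j)); last first.
  move=> b; apply: cgood_mul; last exact: cgood_cst.
  apply: cgood_sum => a; apply: cgood_mul; [exact: cgood_cst|exact: gF].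
rewrite [RHS]mxE; apply: eq_bigr => b _.
rewrite cint_mulr; last first.
  apply: cgood_sum => a; apply: cgood_mul; [exact: cgood_cst|exact: gF].
rewrite (@cint_sum _ _ _ (fun a g => A i a * F g a b)); last first.
  move=> a; apply: cgood_mul; [exact: cgood_cst|exact: gF].
rewrite [in RHS]mxE; congr (_ * _); apply: eq_bigr => a _.
by rewrite cint_mull // mxE.
Qed.

Lemma cintM_inv p q (F : G -> 'M[R[i]]_(p, q)) a :
  mgood F -> cintM (fun g => F (mul a g)) = cintM F.
Proof. by move=> gF; apply/matrixP => i j; rewrite !mxE (@cint_inv (fun g => F g i j) a (gF i j)). Qed.

Lemma cintM_tr p (F : G -> 'M[R[i]]_p) :
  mgood F -> \tr (cintM F) = cintegral mu (fun g => \tr (F g)).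
Proof.
move=> gF; rewrite /mxtrace (@cint_sum _ _ _ (fun i g => F g i i)) //.
by apply: eq_bigr => i _; rewrite mxE.
Qed.

Lemma adjmxM m p q (A : 'M[R[i]]_(m, p)) (B : 'M[R[i]]_(p, q)) :
  adjmx (A *m B) = adjmx B *m adjmx A.
Proof. by rewrite /adjmx trmx_mul map_mxM. Qed.

Lemma rep_good n (s : G -> 'M[R[i]]_n) : is_unitary_rep mul one s -> mgood s.
Proof. by case=> _ _ _ Hc i j; split; case: (Hc i j). Qed.

Lemma rep_unit n (s : G -> 'M[R[i]]_n) g : is_unitary_rep mul one s ->
  adjmx (s g) *m s g = 1%:M.
Proof. by case=> _ _ Hu _; apply: mulmx1C; exact: Hu. Qed.

Lemma rep_mul n (s : G -> 'M[R[i]]_n) a b : is_unitary_rep mul one s ->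
  s (mul a b) = s a *m s b.
Proof. by case=> Hm _ _ _; exact: Hm. Qed.

Section Orth.
Variables (n1 n2 : nat) (s1 : G -> 'M[R[i]]_n1) (s2 : G -> 'M[R[i]]_n2).
Hypotheses (H1 : is_unitary_rep mul one s1) (H2 : is_unitary_rep mul one s2).
Variables (k1 : 'I_n1) (k2 : 'I_n2).

Definition Fk g := col k1 (s1 g) *m adjmx (col k2 (s2 g)).
Definition avg := cintM Fk.

Lemma Fk_good : mgood Fk.
Proof.
apply: mgood_mul.
  move=> i j; have -> : (fun g => col k1 (s1 g) i j) = (fun g => s1 g i k1).
    by apply/funext => g; rewrite mxE.
  exact: (rep_good H1).
apply: mgood_adj => i j; have -> : (fun g => col k2 (s2 g) i j) = (fun g => s2 g i k2).
  by apply/funext => g; rewrite mxE.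
exact: (rep_good H2).
Qed.

Lemma avg_comm h : s1 h *m avg = avg *m s2 h.
Proof.
have E : s1 h *m avg *m adjmx (s2 h) = avg.
  rewrite /avg -cintM_mul; last exact: Fk_good.
  rewrite -(cintM_inv h Fk_good); congr cintM; apply/funext => g.
  by rewrite /Fk !(rep_mul _ _ H1) !(rep_mul _ _ H2) !colE !adjmxM !mulmxA.
by rewrite -[in RHS]E -mulmxA (rep_unit _ H2) mulmx1.
Qed.

Lemma avg_entry j1 j2 :
  avg j1 j2 = cintegral mu (fun g => s1 g j1 k1 * conjc (s2 g j2 k2)).
Proof.
rewrite /avg mxE; congr cintegral; apply/funext => g.
by rewrite /Fk mxE big_ord1 !mxE.
Qed.

End Orth.

Lemma avg_tr n (s : G -> 'M[R[i]]_n) (H : is_unitary_rep mul one s) k k' :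
  \tr (avg s s k k') = (k' == k)%:R.
Proof.
rewrite /avg cintM_tr; last exact: Fk_good.
have -> : (fun g => \tr (Fk s s k k' g)) = (fun _ => (k' == k)%:R).
  apply/funext => g; rewrite /Fk mxtrace_mulC trace_mx11.
  have -> : (k' == k)%:R = (adjmx (s g) *m s g) k' k :> R[i].
    by rewrite (rep_unit g H) mxE.
  rewrite !mxE.
  by apply: eq_bigr => j _; rewrite !mxE.
exact: cint_cst.
Qed.

Lemma schur_orth_eq n (s : G -> 'M[R[i]]_n) (H : is_unitary_rep mul one s)
  (Hi : is_irreducible s) j j' k k' :
  cintegral mu (fun g => s g j k * conjc (s g j' k')) =
  (j == j')%:R * (k == k')%:R / n%:R.
Proof.
have [c Hc] := schur_scalar Hi (avg_comm H H k k').
have npos : n != 0%N by case: Hi; rewrite lt0n.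
have nz : (n%:R : R[i]) != 0 by rewrite pnatr_eq0.
have := avg_tr H k k'; rewrite Hc mxtrace_scalar -[c *+ n]mulr_natr => ec.
have cE : c = (k == k')%:R / n%:R.
  by rewrite eq_sym -ec mulfK.
rewrite -avg_entry Hc mxE cE.
by case: (j == j'); rewrite ?mulr1n ?mul1r ?mulr0n ?mul0r.
Qed.

Lemma schur_orth_ne n1 n2 (s1 : G -> 'M[R[i]]_n1) (s2 : G -> 'M[R[i]]_n2)
  (H1 : is_unitary_rep mul one s1) (H2 : is_unitary_rep mul one s2)
  (I1 : is_irreducible s1) (I2 : is_irreducible s2) (ni : ~ rep_iso s1 s2) j j' k k' :
  cintegral mu (fun g => s1 g j k * conjc (s2 g j' k')) = 0.
Proof.
by rewrite -avg_entry (schur_zero I1 I2 ni (avg_comm H1 H2 k k')) mxE.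
Qed.

Section Main.
Variables (n : nat) (rho : G -> 'M[R[i]]_n) (Hrho : is_unitary_rep mul one rho)
  (L : nat) (N Rm : 'I_L -> nat) (sigma : forall l : 'I_L, G -> 'M[R[i]]_(N l))
  (Hsigma : forall l, is_unitary_rep mul one (sigma l) /\ is_irreducible (sigma l))
  (Hnoniso : forall l l' : 'I_L, l != l' -> ~ rep_iso (sigma l) (sigma l'))
  (Phi : cidx N Rm -> 'I_n -> R[i])
  (HPhi : unitary_coords Phi)
  (HPhieq : equivariant_coords rho sigma Phi).

Definition Mm (m : 'M[R[i]]_n) x y :=
  \sum_a \sum_b Phi x a * m a b * conjc (Phi y b).

Lemma Mm_int f x y : Mm (moment2 mu rho f) x y =
  cintegral mu (fun g => coords Phi (rho g *m f) x * conjc (coords Phi (rho g *m f) y)).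
Proof.
have gv : forall a, cgood (fun g => (rho g *m f) a 0).
  by move=> a; exact: (mgood_mul (rep_good Hrho) (mgood_cst f) a 0).
have -> : (fun g => coords Phi (rho g *m f) x * conjc (coords Phi (rho g *m f) y)) =
  (fun g => \sum_a \sum_b (Phi x a * conjc (Phi y b)) *
      ((rho g *m f) a 0 * conjc ((rho g *m f) b 0))).
  apply/funext => g; rewrite /coords rmorph_sum /= mulr_suml; apply: eq_bigr => a _.
  rewrite mulr_sumr; apply: eq_bigr => b _; rewrite rmorphM /=.
  by rewrite mulrACA.
rewrite (@cint_sum _ _ _ (fun a g => \sum_b (Phi x a * conjc (Phi y b)) *
      ((rho g *m f) a 0 * conjc ((rho g *m f) b 0)))); last first.
  move=> a; apply: cgood_sum => b; apply: cgood_mul; first exact: cgood_cst.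
  by apply: cgood_mul => //; exact: cgood_conj.
apply: eq_bigr => a _.
rewrite (@cint_sum _ _ _ (fun b g => (Phi x a * conjc (Phi y b)) *
      ((rho g *m f) a 0 * conjc ((rho g *m f) b 0)))); last first.
  move=> b; apply: cgood_mul; first exact: cgood_cst.
  by apply: cgood_mul => //; exact: cgood_conj.
apply: eq_bigr => b _.
rewrite cint_mull; last by apply: cgood_mul => //; exact: cgood_conj.
by rewrite mxE mulrAC.
Qed.

Definition Ic l l' (j : 'I_(N l)) (k : 'I_(N l)) (j' : 'I_(N l')) (k' : 'I_(N l')) :=
  cintegral mu (fun g => sigma l g j k * conjc (sigma l' g j' k')).

Lemma Mm_expand f l l' (j : 'I_(N l)) (i : 'I_(Rm l)) (j' : 'I_(N l')) (i' : 'I_(Rm l')) :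
  Mm (moment2 mu rho f) (mkidx j i) (mkidx j' i') =
  \sum_k \sum_k' (coords Phi f (mkidx k i) * conjc (coords Phi f (mkidx k' i'))) *
     Ic j k j' k'.
Proof.
have gs := fun l => rep_good (proj1 (Hsigma l)).
rewrite Mm_int.
have -> : (fun g => coords Phi (rho g *m f) (mkidx j i) *
     conjc (coords Phi (rho g *m f) (mkidx j' i'))) =
  (fun g => \sum_k \sum_k' (coords Phi f (mkidx k i) * conjc (coords Phi f (mkidx k' i'))) *
     (sigma l g j k * conjc (sigma l' g j' k'))).
  apply/funext => g; rewrite !HPhieq rmorph_sum /= mulr_suml; apply: eq_bigr => k _.
  rewrite mulr_sumr; apply: eq_bigr => k' _; rewrite rmorphM /=.
  by rewrite [LHS]mulrACA [LHS]mulrC.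
rewrite (@cint_sum _ _ _ (fun k g => \sum_k' (coords Phi f (mkidx k i) * conjc (coords Phi f (mkidx k' i'))) *
     (sigma l g j k * conjc (sigma l' g j' k')))); last first.
  move=> k; apply: cgood_sum => k'; apply: cgood_mul; first exact: cgood_cst.
  by apply: cgood_mul; [exact: gs|apply: cgood_conj; exact: gs].
apply: eq_bigr => k _.
rewrite (@cint_sum _ _ _ (fun k' g => (coords Phi f (mkidx k i) * conjc (coords Phi f (mkidx k' i'))) *
     (sigma l g j k * conjc (sigma l' g j' k')))); last first.
  move=> k'; apply: cgood_mul; first exact: cgood_cst.
  by apply: cgood_mul; [exact: gs|apply: cgood_conj; exact: gs].
apply: eq_bigr => k' _.
rewrite cint_mull //.
by apply: cgood_mul; [exact: gs|apply: cgood_conj; exact: gs].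
Qed.

Definition Gr f l (i i' : 'I_(Rm l)) :=
  \sum_k coords Phi f (mkidx k i) * conjc (coords Phi f (mkidx k i')).

Lemma Mm_same f l (j : 'I_(N l)) i j' i' :
  Mm (moment2 mu rho f) (mkidx j i) (mkidx j' i') = (j == j')%:R / (N l)%:R * Gr f i i'.
Proof.
rewrite Mm_expand /Gr mulr_sumr; apply: eq_bigr => k _.
rewrite (bigD1 k) //= big1 ?addr0.
  rewrite /Ic (schur_orth_eq (proj1 (Hsigma l)) (proj2 (Hsigma l))) eqxx mulr1.
  by rewrite mulrC.
move=> k' nk; rewrite /Ic (schur_orth_eq (proj1 (Hsigma l)) (proj2 (Hsigma l))).
by rewrite [k == _]eq_sym (negbTE nk) mulr0 mul0r mulr0.
Qed.

Lemma Mm_diff f l l' (j : 'I_(N l)) i (j' : 'I_(N l')) i' : l != l' ->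
  Mm (moment2 mu rho f) (mkidx j i) (mkidx j' i') = 0.
Proof.
move=> nl; rewrite Mm_expand big1 // => k _; rewrite big1 // => k' _.
rewrite /Ic (schur_orth_ne (proj1 (Hsigma l)) (proj1 (Hsigma l'))
   (proj2 (Hsigma l)) (proj2 (Hsigma l')) (Hnoniso nl)).
by rewrite mulr0.
Qed.

Lemma inv_M (m : 'M[R[i]]_n) a b :
  \sum_x \sum_y conjc (Phi x a) * Mm m x y * Phi y b = m a b.
Proof.
have [HP1 _] := HPhi.
have L1 : forall (c : 'I_n -> R[i]) b,
    \sum_y (\sum_b' c b' * conjc (Phi y b')) * Phi y b = c b.
  move=> c b0.
  transitivity (\sum_b' c b' * (\sum_y conjc (Phi y b') * Phi y b0)).
    rewrite (eq_bigr (fun y => \sum_b' c b' * conjc (Phi y b') * Phi y b0)); last first.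
      by move=> y _; rewrite mulr_suml.
    rewrite exchange_big; apply: eq_bigr => b' _; rewrite mulr_sumr.
    by apply: eq_bigr => y _; rewrite mulrA.
  rewrite (bigD1 b0) //= [X in _ + X]big1 ?addr0; first by rewrite HP1 eqxx mulr1.
  by move=> b' nb; rewrite HP1 (negbTE nb) mulr0.
have L2 : forall (d : 'I_n -> R[i]) a,
    \sum_x conjc (Phi x a) * (\sum_a' Phi x a' * d a') = d a.
  move=> d a0.
  transitivity (\sum_a' (\sum_x conjc (Phi x a0) * Phi x a') * d a').
    rewrite (eq_bigr (fun x => \sum_a' conjc (Phi x a0) * Phi x a' * d a')); last first.
      by move=> x _; rewrite mulr_sumr; apply: eq_bigr => a' _; rewrite mulrA.
    rewrite exchange_big; apply: eq_bigr => a' _; rewrite mulr_suml //.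
  rewrite (bigD1 a0) //= [X in _ + X]big1 ?addr0; first by rewrite HP1 eqxx mul1r.
  by move=> a' na; rewrite HP1 eq_sym (negbTE na) mul0r.
have E : forall x y, Mm m x y =
    \sum_b' (\sum_a' Phi x a' * m a' b') * conjc (Phi y b').
  move=> x y; rewrite /Mm exchange_big; apply: eq_bigr => b' _.
  by rewrite mulr_suml.
rewrite -(L2 (fun a' => m a' b) a); apply: eq_bigr => x _.
rewrite -(L1 (fun b' => \sum_a' Phi x a' * m a' b') b) mulr_sumr.
by apply: eq_bigr => y _; rewrite E mulrA.
Qed.

Lemma moment_Gr f f' :
  moment2 mu rho f = moment2 mu rho f' <->
  forall l (i i' : 'I_(Rm l)), Gr f i i' = Gr f' i i'.
Proof.
split.
  move=> E l i i'.
  have npos : (0 < N l)%N by case: (proj2 (Hsigma l)).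
  pose j0 := Ordinal npos.
  have := Mm_same f j0 i j0 i'; rewrite E Mm_same eqxx.
  have nz : ((N l)%:R : R[i]) != 0 by rewrite pnatr_eq0 -lt0n.
  move=> h; apply/esym; apply: (mulfI _ h); by rewrite mul1r invr_eq0.
move=> HG2.
have EM : forall x y, Mm (moment2 mu rho f) x y = Mm (moment2 mu rho f') x y.
  case=> l [j i]; case=> l' [j' i'].
  have [e|nl] := eqVneq l l'.
    subst l'; by rewrite (Mm_same f j i j' i') (Mm_same f' j i j' i') HG2.
  by rewrite (Mm_diff f j i j' i' nl) (Mm_diff f' j i j' i' nl).
apply/matrixP => a b; rewrite -inv_M -[RHS]inv_M.
by apply: eq_bigr => x _; apply: eq_bigr => y _; rewrite EM.
Qed.

Definition PM f l : 'M[R[i]]_(Rm l, N l) := \matrix_(i, k) coords Phi f (mkidx k i).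

Lemma Gr_PM f l (i i' : 'I_(Rm l)) : Gr f i i' = (PM f l *m adjmx (PM f l)) i i'.
Proof. by rewrite /Gr mxE; apply: eq_bigr => k _; rewrite !mxE. Qed.

Lemma unit_conv m (U : 'M[R[i]]_m) : Defs.unitarymx U -> U \is spectral.unitarymx.
Proof. by move=> h; apply/spectral.unitarymxP. Qed.

Lemma Hrel_Gr f f' : H_related Phi f f' <-> forall l (i i' : 'I_(Rm l)), Gr f i i' = Gr f' i i'.
Proof.
split.
  move=> [U [Uu HU]] l i i'.
  have EP : PM f l = PM f' l *m (U l)^T.
    apply/matrixP => a b; rewrite !mxE HU; apply: eq_bigr => k _.
    by rewrite !mxE mulrC.
  have UT : (U l)^T *m adjmx (U l)^T = 1%:M.
    apply/spectral.unitarymxP; rewrite trmx_unitary; exact: unit_conv.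
  rewrite !Gr_PM EP adjmxM mulmxA -(mulmxA (PM f' l)) UT mulmx1 //.
move=> HG2.
have ex : forall l, exists V : 'M[R[i]]_(N l), V \is spectral.unitarymx /\ PM f' l *m V = PM f l.
  move=> l; apply: Gram_unitary.
  by apply/matrixP => i i'; rewrite -!Gr_PM HG2.
exists (fun l => (projT1 (cid (ex l)))^T); split.
  move=> l; case: (cid (ex l)) => V [uV _] /=.
  by apply/spectral.unitarymxP; rewrite trmx_unitary.
move=> l j i; case: (cid (ex l)) => V [_ eV] /=.
have := congr1 (fun M : 'M[R[i]]_(Rm l, N l) => M i j) eV; rewrite /= !mxE => <-.
by apply: eq_bigr => k _; rewrite !mxE mulrC.
Qed.

Lemma main_equiv f f' :
  moment2 mu rho f = moment2 mu rho f' <-> H_related Phi f f'.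
Proof.
split.
  by move=> /moment_Gr h; apply/Hrel_Gr.
by move=> /Hrel_Gr h; apply/moment_Gr.
Qed.

End Main.

End CInt.

Unset Implicit Arguments.
Theorem theorem2p3
  (R : realType) (G : ptopologicalType)
  (mul : G -> G -> G) (inv : G -> G) (one : G)
  (HG : is_compact_group mul inv one)
  (mu : probability (Borel G) R) (Hmu : is_normalized_haar mul mu)
  (n : nat) (rho : G -> 'M[R[i]]_n) (Hrho : is_unitary_rep mul one rho)
  (L : nat) (N Rm : 'I_L -> nat)
  (sigma : forall l : 'I_L, G -> 'M[R[i]]_(N l))
  (Hsigma : forall l, is_unitary_rep mul one (sigma l) /\ is_irreducible (sigma l))
  (Hnoniso : forall l l' : 'I_L, l != l' -> ~ rep_iso (sigma l) (sigma l'))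
  (Phi : cidx N Rm -> 'I_n -> R[i])
  (HPhi : unitary_coords Phi)
  (HPhieq : equivariant_coords rho sigma Phi)
  (f f' : 'cV[R[i]]_n) :
  moment2 mu rho f = moment2 mu rho f' <-> H_related Phi f f'.
Proof.
exact: (main_equiv HG Hmu Hrho Hsigma Hnoniso HPhi HPhieq f f').
Qed.
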